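(* For all integers $n,m,k\ge 0$, the number of Dyck paths of semilength $n$ with $m$ contacts and $k$ up-steps at odd height equals the number of Dyck paths of semilength $n$ with $m$ contacts and $k$ peaks.
   Context: Paths have steps $(1,1)$ (up-steps) and $(1,-1)$ (down-steps) and start at $(0,0)$. A Dyck path ends on the line $y=0$ and has no vertex with negative $y$-coordinate. The semilength is half the number of steps. An up-step is at height $j$ if it goes from $(i-1,j-1)$ to $(i,j)$; a down-step is at height $j$ if it goes from $(i,j)$ to $(i+1,j-1)$; it is at odd height if $j$ is odd. A peak is an up-step immediately followed by a down-step. A contact is a down-step at height $1$ or an up-step at height $0$. *)

(* Defs.v *)
From mathcomp Require Import all_boot all_order all_algebra.
Import GRing.Theory Num.Theory.
Set Implicit Arguments. Unset Strict Implicit. Unset Printing Implicit Defensive.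

(* A path is a sequence of steps: true = up-step (1,1), false = down-step (1,-1). *)

Definition endheight (s : seq bool) : int :=
  foldr (fun b h => if b then (h + 1)%R else (h - 1)%R) 0%R s.

Definition hbefore (s : seq bool) (i : nat) : int := endheight (take i s).

Definition dyck (n : nat) (s : seq bool) : bool :=
  [&& size s == 2 * n,
      endheight s == 0%R &
      all (fun i => (0 <= hbefore s i)%R) (iota 0 (size s).+1)].

(* height of step i: an up-step from y = j-1 to j has height j;
   a down-step from y = j to j-1 has height j *)
Definition stepheight (s : seq bool) (i : nat) : int :=
  if nth false s i then (hbefore s i + 1)%R else hbefore s i.

Definition odd_ups (s : seq bool) : nat :=
  count (fun i => nth false s i && odd `|stepheight s i|%N) (iota 0 (size s)).

Definition peaks (s : seq bool) : nat :=
  count (fun i => nth false s i && ~~ nth true s i.+1) (iota 0 (size s)).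

Definition contacts (s : seq bool) : nat :=
  count (fun i => if nth false s i then stepheight s i == 0%R
                  else stepheight s i == 1%R) (iota 0 (size s)).

Definition dyck_paths (n : nat) : seq (seq bool) :=
  [seq val t | t in [pred t : (2 * n).-tuple bool | dyck n (val t)]].

(* Main.v *)
Require Import Defs.
From mathcomp Require Import all_boot all_order all_algebra zify.
Import GRing.Theory Num.Theory.
Set Implicit Arguments. Unset Strict Implicit. Unset Printing Implicit Defensive.
Local Open Scope ring_scope.

Definition dz (b : bool) : int := if b then 1 else -1.

Lemma endheight_cons b s : endheight (b :: s) = dz b + endheight s.
Proof. by rewrite /endheight /= /dz; case: b; rewrite addrC. Qed.

Lemma hbefore0 s : hbefore s 0 = 0.
Proof. by rewrite /hbefore take0. Qed.

Lemma hbeforeS b s i : hbefore (b :: s) i.+1 = dz b + hbefore s i.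
Proof. by rewrite /hbefore /= -endheight_cons. Qed.

Fixpoint st (Q : int -> bool -> bool) (h : int) (s : seq bool) : nat :=
  match s with [::] => 0%N | b :: s' => (Q h b + st Q (h + dz b) s')%N end.

Lemma stE Q h s :
  count (fun i => Q (h + hbefore s i) (nth false s i)) (iota 0 (size s)) = st Q h s.
Proof.
elim: s h => //= b s IH h.
rewrite addr0 -(IH (h + dz b)) -[iota 1 _]/(iota (1 + 0) _) iotaDl count_map.
congr (_ + _)%N; apply: eq_count => i /=.
by rewrite hbeforeS addrA.
Qed.

Lemma oddE n : odd n = (n %% 2 == 1)%N.
Proof. by rewrite modn2; case: odd. Qed.

Lemma odd_abs_dz (x : int) b : odd `|(x + dz b)%R|%N = ~~ odd `|x|%N.
Proof.
rewrite !oddE /dz; case: b; do 2 case: eqP => //=; lia.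
Qed.

Definition oq (h : int) (b : bool) : bool := b && odd `|(h + 1)%R|%N.
Definition cq (h : int) (b : bool) : bool := if b then h + 1 == 0 else h == 1.

Fixpoint ou (p : bool) (s : seq bool) : nat :=
  match s with [::] => 0%N | b :: s' => ((b && p) + ou (~~ p) s')%N end.

Fixpoint pk (s : seq bool) : nat :=
  match s with [::] => 0%N | b :: s' => ((b && ~~ head true s') + pk s')%N end.

Lemma st_oq h s : st oq h s = ou (odd `|(h + 1)%R|%N) s.
Proof.
elim: s h => //= b s IH h; rewrite IH /oq; congr (_ + _)%N.
by rewrite -addrA (addrC (dz b)) addrA odd_abs_dz.
Qed.

Lemma odd_upsE s : odd_ups s = ou true s.
Proof.
rewrite /odd_ups -(st_oq 0) -stE; apply: eq_count => i.
by rewrite /oq /stepheight add0r; case: nth.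
Qed.

Lemma contactsE s : contacts s = st cq 0 s.
Proof.
rewrite /contacts -stE; apply: eq_count => i.
by rewrite /cq /stepheight add0r; case: nth.
Qed.

Lemma peaksE s : peaks s = pk s.
Proof.
rewrite /peaks; elim: s => //= b s IH.
rewrite -[iota 1 _]/(iota (1 + 0) _) iotaDl count_map -IH; congr (_ + _)%N.

Qed.

Lemma iota0S n : iota 0 n.+1 = 0%N :: map S (iota 0 n).
Proof. by rewrite /= (iotaDl 1 0); congr (_ :: _); apply: eq_map. Qed.

Lemma all_iota0S (P : pred nat) n :
  all P (iota 0 n.+1) = P 0%N && all (fun i => P i.+1) (iota 0 n).
Proof. by rewrite iota0S /= all_map. Qed.

Fixpoint okt (h t : nat) (s : seq bool) : bool :=
  match s with
  | [::] => h == t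
  | b :: s' => if b then okt h.+1 t s' else (0 < h)%N && okt h.-1 t s'
  end.

Lemma okt_hb h s :
  okt h 0 s = (h%:Z + endheight s == 0) &&
              all (fun i => 0 <= h%:Z + hbefore s i) (iota 0 (size s).+1).
Proof.
elim: s h => [|b s IH] h.
  rewrite /= /hbefore /= addr0 andbT.
  by apply/idP/idP; lia.
rewrite [size _]/= all_iota0S hbefore0 addr0 endheight_cons.
case: b.
  rewrite [okt _ _ _]/= IH (_ : (0 <= h%:Z) = true); last by apply/idP; lia.
  congr (_ && _).
    by apply/idP/idP; rewrite /dz; lia.
  by apply: eq_all => i /=; rewrite hbeforeS /dz; apply/idP/idP; lia.
case: h => [|h].
  by rewrite /= hbeforeS hbefore0 /dz !andbF.
rewrite [okt _ _ _]/= IH (_ : (0 <= h.+1%:Z) = true); last by apply/idP; lia.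
congr (_ && _).
  by apply/idP/idP; rewrite /dz; lia.
by apply: eq_all => i /=; rewrite hbeforeS /dz; apply/idP/idP; lia.
Qed.

Lemma dyckE n s : dyck n s = (size s == 2 * n)%N && okt 0 0 s.
Proof.
rewrite /dyck okt_hb add0r; congr (_ && (_ && _)).
by apply: eq_all => i; rewrite add0r.
Qed.

Local Open Scope nat_scope.

Lemma okt_cat h m t a c : okt h m a -> okt m t c -> okt h t (a ++ c).
Proof.
elim: a h => [|b a IH] h /=; first by move/eqP->.
case: b => [/IH//|/andP[-> /IH//]].
Qed.

Lemma okt_shift h t d a : okt h t a -> okt (h + d) (t + d) a.
Proof.
elim: a h => [|b a IH] h /=; first by move/eqP->.
case: b => [/IH//|/andP[h0 /IH]].
by rewrite addn_gt0 h0 /= -subn1 addnBAC // subn1.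
Qed.

Lemma okt_size h t s : okt h t s -> 2 * count id s + h = size s + t.
Proof.
elim: s h => [|b s IH] h /=; first by move/eqP->.
case: b => [/IH|/andP[h0 /IH]] /=; lia.
Qed.

Lemma okt_split s k h : okt (k + h.+1) 0 s ->
  exists a c, s = a ++ false :: c /\ okt k 0 a /\ okt h 0 c.
Proof.
elim: s k => [|b s IH] k /=; first by rewrite addnS.
case: b.
  rewrite -addSn => /IH [a [c [-> [Ha Hc]]]].
  by exists (true :: a), c.
case: k => [|k] /andP[_ H].
  by exists [::], s.
have [a [c [-> [Ha Hc]]]] := IH k H.
by exists (false :: a), c.
Qed.

Lemma okt_last h a x : okt h 0 a -> a != [::] -> last x a = false.
Proof.
elim: a h x => [|b a IH] h x //= H _.
case: a IH H => [|b' a] IH H.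
  by case: b H => //=; rewrite andbT.
case: b H => [/IH|/andP[_ /IH]] -> //.
Qed.

Definition mk (a c : seq bool) := true :: a ++ false :: c.

Fixpoint dlf (f n : nat) : seq (seq bool) :=
  match f with
  | 0 => [:: [::]]
  | f'.+1 => match n with
    | 0 => [:: [::]]
    | n'.+1 => flatten [seq [seq mk a c | a <- dlf f' i, c <- dlf f' (n' - i)]
                       | i <- iota 0 n'.+1]
    end
  end.

Definition dl n := dlf n n.

Lemma dlfS f n : dlf f.+1 n.+1 =
  flatten [seq [seq mk a c | a <- dlf f i, c <- dlf f (n - i)] | i <- iota 0 n.+1].
Proof. by []. Qed.

Lemma dlf_stable f g n : n <= f -> n <= g -> dlf f n = dlf g n.
Proof.
elim: f g n => [|f IH] [|g] [|n] // Hf Hg.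
rewrite !dlfS; congr flatten; apply/eq_in_map => i; rewrite mem_iota => /andP[_ Hi].
by rewrite (IH g i) ?(IH g (n - i)) //; lia.
Qed.

Lemma dl0 : dl 0 = [:: [::]].
Proof. by []. Qed.

Lemma dlS n : dl n.+1 =
  flatten [seq [seq mk a c | a <- dl i, c <- dl (n - i)] | i <- iota 0 n.+1].
Proof.
rewrite /dl; rewrite !dlfS; congr flatten; apply/eq_in_map => i; rewrite mem_iota => /andP[_ Hi].
rewrite (dlf_stable (f := n) (g := i) (n := i)) ?(dlf_stable (f := n) (g := n - i) (n := n - i)) //; lia.
Qed.

Lemma mem_dlS n s : (s \in dl n.+1) =
  has (fun i => s \in [seq mk a c | a <- dl i, c <- dl (n - i)]) (iota 0 n.+1).
Proof.
rewrite dlS; apply/flatten_mapP/hasP => [[i Hi Hs]|[i Hi Hs]]; by exists i.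
Qed.

Lemma dl_ok n s : s \in dl n -> okt 0 0 s && (size s == 2 * n).
Proof.
elim/ltn_ind: n s => [[|n]] IH s.
  by rewrite dl0 inE => /eqP->.
rewrite mem_dlS => /hasP[i]; rewrite mem_iota => /andP[_ Hi] /allpairsP[[a c] [Ha Hc ->]] /=.
have /andP[oa /eqP sa] := IH i (ltac:(lia)) a Ha.
have /andP[oc /eqP sc] := IH (n - i) (ltac:(lia)) c Hc.
apply/andP; split.
  apply: (okt_cat (m := 1)); first by have := okt_shift 1 oa.
  by rewrite /= oc.
rewrite /= size_cat /= sa sc; apply/eqP; lia.
Qed.

Lemma ok_dl n s : okt 0 0 s -> size s = 2 * n -> s \in dl n.
Proof.
elim/ltn_ind: n s => n IH [|b s] /=.
  by move=> _ /esym/eqP; rewrite muln_eq0 /= => /eqP->; rewrite dl0 inE.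
case: b => //= H Hs.
have [a [c [Es [Ha Hc]]]] := okt_split (k := 0) (h := 0) H.
have sa := okt_size Ha; have sc := okt_size Hc.
move: Hs; rewrite Es size_cat /= => Hs.
case: n IH Hs => [|n] IH Hs; first by lia.
set i := count id a.
rewrite mem_dlS; apply/hasP; exists i; first by rewrite mem_iota; lia.
apply/allpairsP; exists (a, c); split => //=.
  by apply: IH => //; lia.
apply: IH => //; lia.
Qed.

Lemma dl_dyck n s : (s \in dl n) = dyck n s.
Proof.
rewrite dyckE; apply/idP/idP => [/dl_ok/andP[-> ->] //|/andP[/eqP Hs Ho]].
exact: ok_dl.
Qed.

Fixpoint frs (k : nat) (s : seq bool) : seq bool * seq bool :=
  match s with
  | [::] => ([::], [::])
  | b :: s' =>
    if b then let p := frs k.+1 s' in (true :: p.1, p.2)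
    else if k is k'.+1 then let p := frs k' s' in (false :: p.1, p.2)
    else ([::], s')
  end.

Lemma frs_mk k a c : okt k 0 a -> frs k (a ++ false :: c) = (a, c).
Proof.
elim: a k => [|b a IH] k /=; first by move/eqP->.
case: b => [/IH -> //|].
by case: k => [|k] //= /IH ->.
Qed.

Definition fr (s : seq bool) := frs 0 (behead s).

Lemma fr_mk a c : okt 0 0 a -> fr (mk a c) = (a, c).
Proof. exact: frs_mk. Qed.

Lemma uniq_flat_key (T : eqType) (f : nat -> seq T) (key : T -> nat) l :
  uniq l -> (forall i, i \in l -> uniq (f i) /\ forall x, x \in f i -> key x = i) ->
  uniq (flatten (map f l)).
Proof.
elim: l => [|i l IH] //= /andP[il ul] H.
rewrite cat_uniq; have [u1 k1] := H i (mem_head _ _).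
rewrite u1 IH ?andbT //; last by move=> j jl; apply: H; rewrite inE jl orbT.
apply/hasP => [[x /flatten_mapP[j jl xj] xi]].
have [_ kj] := H j (ltac:(by rewrite inE jl orbT)).
have E : i = j by rewrite -(k1 x xi) (kj x xj).
by rewrite E jl in il.
Qed.

Lemma dl_uniq n : uniq (dl n).
Proof.
elim/ltn_ind: n => [[|n]] IH //.
rewrite dlS; apply: (uniq_flat_key (key := fun x => (size (fr x).1)./2)).
  exact: iota_uniq.
move=> i; rewrite mem_iota => /andP[_ Hi]; split.
  apply: allpairs_uniq; [exact: IH | apply: IH; lia |].
  move=> [a1 c1] [a2 c2] /allpairsP[[a1' c1'] [Ha1 _ [-> ->]]]
     /allpairsP[[a2' c2'] [Ha2 _ [-> ->]]] /= E.
  have /andP[o1 _] := dl_ok Ha1; have /andP[o2 _] := dl_ok Ha2.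
  by have := fr_mk c1' o1; rewrite E fr_mk // => -[-> ->].
move=> x /allpairsP[[a c] [Ha _ ->]] /=.
have /andP[o /eqP s] := dl_ok Ha.
by rewrite fr_mk //= s; lia.
Qed.

Lemma dyck_perm n : perm_eq (dyck_paths n) (dl n).
Proof.
apply: uniq_perm; first by rewrite /dyck_paths map_inj_uniq ?enum_uniq //; exact: val_inj.
  exact: dl_uniq.
move=> s; rewrite dl_dyck; apply/mapP/idP => [[t]|H].
  by rewrite mem_enum inE => H ->.
have Hs : size s == 2 * n by move: H; rewrite dyckE => /andP[].
by exists (Tuple Hs); rewrite // mem_enum inE.
Qed.

Lemma okt_end h t s : okt h t s -> (h%:Z + endheight s = t%:Z)%R.
Proof.
elim: s h => [|b s IH] h /=; first by move/eqP->; rewrite addr0.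
case: b => [/IH|/andP[h0 /IH]]; lia.
Qed.

Lemma st_cat Q h a c : st Q h (a ++ c) = st Q h a + st Q (h + endheight a)%R c.
Proof.
elim: a h => [|b a IH] h /=; first by rewrite addr0.
rewrite IH addnA; congr (_ + st Q _ c).
by case: b; rewrite /dz; lia.
Qed.

Lemma ct_zero k t a (g : int) : okt k t a -> (1 <= g)%R -> st cq (g + k%:Z)%R a = 0.
Proof.
elim: a k => [|b a IH] k //= H g1.
case: b H => [H|/andP[k0 H]].
  rewrite (_ : (g + k%:Z + dz true = g + k.+1%:Z)%R); last by rewrite /dz; lia.
  rewrite IH // (_ : cq (g + k%:Z)%R true = false) //.
  by rewrite /cq; apply/negP => /eqP; lia.
rewrite (_ : (g + k%:Z + dz false = g + k.-1%:Z)%R); last by rewrite /dz; lia.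
rewrite IH // (_ : cq (g + k%:Z)%R false = false) //.
by rewrite /cq; apply/negP => /eqP; lia.
Qed.

Lemma contacts_mk a c : okt 0 0 a -> contacts (mk a c) = (contacts c).+1.
Proof.
move=> H; rewrite !contactsE /mk /= st_cat.
have E := okt_end H; rewrite add0r in E.
have Z := ct_zero (g := 1) H (ltac:(done)); rewrite addr0 in Z.
rewrite E !addr0 add0r Z /=.
by rewrite /dz (_ : (1 + -1 = 0 :> int)%R).
Qed.

Lemma ou_cat p a c : ou p (a ++ c) = ou p a + ou (if odd (size a) then ~~ p else p) c.
Proof.
elim: a p => [|b a IH] p //=.
by rewrite IH addnA; case: odd; rewrite ?negbK.
Qed.

Lemma even_ok a : okt 0 0 a -> odd (size a) = false.
Proof. by move/okt_size; rewrite !addn0 => <-; rewrite mul2n odd_double. Qed.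

Lemma ou_mk p a c : okt 0 0 a -> ou p (mk a c) = (p + ou (~~ p) a + ou p c).
Proof.
move=> H; rewrite /mk /= ou_cat even_ok //= negbK.
by case: p; rewrite /= ?add0n ?addnA.
Qed.

Lemma pk_cons b s : pk (b :: s) = ((b && ~~ head true s) + pk s).
Proof. by []. Qed.

Lemma pk_cat a c : pk (a ++ c) = pk a + pk c + (last false a && ~~ head true c).
Proof.
elim: a => [|b a IH]; first by rewrite /= addn0.
case: a IH => [|b' a] IH.
  by rewrite /= andbF addn0 addnC.
rewrite cat_cons (pk_cons b) (pk_cons b (b' :: a)) IH /=.
by rewrite !addnA.
Qed.

Lemma pk_mk a c : okt 0 0 a -> pk (mk a c) = ((a == [::]) + pk a + pk c).
Proof.
case: a => [|b a] H; first by [].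
rewrite /mk pk_cons pk_cat (okt_last false H) //.
by case: b H => //= _; rewrite !addn0.
Qed.

Lemma allpairs_swap (S T : Type) (R : eqType) (f : S -> T -> R) s t :
  perm_eq [seq f x y | x <- s, y <- t] [seq f x y | y <- t, x <- s].
Proof.
elim: s => [|x s IH] /=; first by elim: t.
rewrite perm_sym (perm_allpairs_consr (fun y x => f x y) t (fun _ => x) (fun _ => s)).
by rewrite perm_cat2l perm_sym.
Qed.

Lemma flat_perm (T : eqType) (f g : nat -> seq T) l :
  (forall i, i \in l -> perm_eq (f i) (g i)) ->
  perm_eq (flatten (map f l)) (flatten (map g l)).
Proof.
elim: l => [|i l IH] //= H.
rewrite perm_cat ?H ?mem_head // IH // => j jl.
by apply: H; rewrite inE jl orbT.
Qed.

Lemma flat_rev (T : eqType) n (B1 B2 : nat -> seq T) :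
  (forall i, i <= n -> perm_eq (B1 i) (B2 (n - i))) ->
  perm_eq (flatten (map B1 (iota 0 n.+1))) (flatten (map B2 (iota 0 n.+1))).
Proof.
move=> H.
apply: (@perm_trans _ (flatten (map (fun i => B2 (n - i)) (iota 0 n.+1)))).
  by apply: flat_perm => i; rewrite mem_iota => /andP[_ Hi]; apply: H; lia.
rewrite (map_comp B2 (subn n)); apply/perm_flatten/perm_map.
apply: uniq_perm; last first.
- move=> x; apply/mapP/idP => [[y]|Hx].
    by rewrite !mem_iota => _ ->; lia.
  exists (n - x); last by move: Hx; rewrite mem_iota; lia.
  by move: Hx; rewrite !mem_iota; lia.
- exact: iota_uniq.
rewrite map_inj_in_uniq ?iota_uniq // => x y; rewrite !mem_iota; lia.
Qed.

Lemma dl_okt i a : a \in dl i -> okt 0 0 a.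
Proof. by move/dl_ok/andP=> []. Qed.

Lemma Sym n : perm_eq (map (fun x => (ou false x).+1) (dl n.+1)) (map (ou true) (dl n.+1)).
Proof.
rewrite dlS !map_flatten -!map_comp; apply: flat_rev => i Hi /=.
rewrite subKn // !map_allpairs.
rewrite [X in perm_eq X _](proj1 (eq_in_allpairs _ (fun a c => (ou true a + ou false c).+1) _ _)); last first.
  by move=> a c /dl_okt Ha _; rewrite ou_mk.
rewrite [X in perm_eq _ X](proj1 (eq_in_allpairs _ (fun a c => (ou false a + ou true c).+1) _ _)); last first.
  by move=> a c /dl_okt Ha _; rewrite ou_mk.
rewrite perm_sym; apply: perm_trans (allpairs_swap (fun (x y : seq bool) => (ou false x + ou true y).+1) (dl (n - i)) (dl i)) _.
by apply/permP => p; congr count; apply: eq_allpairs => x y; rewrite addnC.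
Qed.

Definition FF (x : seq bool) := (contacts x, ou true x).
Definition GG (x : seq bool) := (contacts x, pk x).

Lemma Main n : perm_eq (map FF (dl n)) (map GG (dl n)).
Proof.
elim/ltn_ind: n => [[|n]] IH; first by rewrite dl0.
have Hal : forall i, i <= n -> perm_eq (map (fun a => 1 + ou false a) (dl i))
                                  (map (fun a => (a == [::]) + pk a) (dl i)).
  move=> [|i] Hi; first by rewrite dl0.
  rewrite (eq_map (fun a => add1n (ou false a))).
  apply: perm_trans (Sym i) _.
  rewrite (proj1 (eq_in_map (fun a => (a == [::]) + pk a) pk _)); last first.
    move=> a /dl_ok /andP[_ /eqP sa]; case: a sa => //.
  have := perm_map snd (IH i.+1 (ltac:(lia))).
  by rewrite -!map_comp.
rewrite dlS !map_flatten -!map_comp; apply: flat_perm => i; rewrite mem_iota => /andP[_ Hi] /=.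
rewrite !map_allpairs.
pose h (u : nat) (v : nat * nat) := ((v.1).+1, u + v.2).
rewrite [X in perm_eq X _](_ : _ = [seq h u v | u <- map (fun a => 1 + ou false a) (dl i),
                                               v <- map FF (dl (n - i))]); last first.
  rewrite allpairs_mapl allpairs_mapr; apply/eq_in_allpairs => a c /dl_okt Ha _.
  by rewrite /h /FF contacts_mk // ou_mk.
rewrite [X in perm_eq _ X](_ : _ = [seq h u v | u <- map (fun a => (a == [::]) + pk a) (dl i),
                                               v <- map GG (dl (n - i))]); last first.
  rewrite allpairs_mapl allpairs_mapr; apply/eq_in_allpairs => a c /dl_okt Ha _.
  by rewrite /h /GG contacts_mk // pk_mk.
apply: perm_allpairs; first by apply: Hal; lia.
apply: IH; lia.
Qed.

Theorem corollary1 (n m k : nat) :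
  count (fun s => (contacts s == m) && (odd_ups s == k)) (dyck_paths n) =
  count (fun s => (contacts s == m) && (peaks s == k)) (dyck_paths n).
Proof.
rewrite !(permP (dyck_perm n)).
have := permP (Main n) (pred1 (m, k)); rewrite !count_map.
move=> E; rewrite (eq_count (a2 := preim FF (pred1 (m, k)))); last first.
  by move=> s; rewrite /= /FF odd_upsE xpair_eqE.
rewrite E; apply: eq_count => s.
by rewrite /= /GG peaksE xpair_eqE.
Qed.
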